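(* Let $G$ be a finite nilpotent group which is not cyclic, and let $r,s$ be real numbers. Then $T_G(r,s)>0$ if $r>s$, $T_G(r,s)=0$ if $r=s$, and $T_G(r,s)<0$ if $r<s$.
   Context: $o(x)$ is the order of $x$, $\varphi$ is Euler's totient function, and $C_N$ is the cyclic group of order $N$. For a finite group $G$ and reals $r,s$, $R_G(r,s) := \sum_{x\in G} \frac{o(x)^s}{\varphi(o(x))^r}$ and $T_G(r,s) := R_G(r,s) - R_{C_{|G|}}(r,s)$. *)

(* Defs.v *)
From Stdlib Require Import Reals.
From mathcomp Require Import all_boot all_fingroup all_algebra all_solvable.
Set Implicit Arguments. Unset Strict Implicit. Unset Printing Implicit Defensive.

(* o(x)^s / phi(o(x))^r, with real exponents (bases are >= 1). *)
Definition term_rs (r s : R) (n : nat) : R :=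
  Rdiv (Rpower (INR n) s) (Rpower (INR (totient n)) r).

Definition R_G (gT : finGroupType) (G : {set gT}) (r s : R) : R :=
  foldr Rplus R0 (map (fun x : gT => term_rs r s #[x]%g) (enum G)).

(* R_{C_N}(r,s), with C_N realised as the cyclic group Zp N (order N for N>0). *)
Definition R_C (N : nat) (r s : R) : R := R_G (Zp N) r s.

Definition T_G (gT : finGroupType) (G : {set gT}) (r s : R) : R :=
  Rminus (R_G G r s) (R_C #|G| r s).

(* Main.v *)
Require Import Defs.
From Stdlib Require Import Reals.
From mathcomp Require Import all_boot all_order all_fingroup all_algebra all_solvable.
From mathcomp Require Import Rstruct.
From mathcomp Require Import ring lra.
Set Implicit Arguments. Unset Strict Implicit. Unset Printing Implicit Defensive.
Import GRing.Theory Num.Theory Order.TTheory.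

Local Open Scope ring_scope.
Section Main.
Variables r s : R.
Local Notation f := (term_rs r s).

Lemma Rpow_pos x y : Rlt R0 (Rpower x y).
Proof. rewrite /Rpower; exact: exp_pos. Qed.

Lemma Rpow_pos' x y : 0 < Rpower x y.
Proof. apply/RltP; exact: Rpow_pos. Qed.

Lemma f_pos n : 0 < f n.
Proof.
rewrite /term_rs RdivE; apply: divr_gt0; exact: Rpow_pos'.
Qed.

Lemma f1 : f 1 = 1.
Proof.
rewrite /term_rs /Rpower /= ln_1 !Rmult_0_r exp_0.
by rewrite RdivE divr1.
Qed.

Lemma INR_pos n : (0 < n)%N -> Rlt R0 (INR n).
Proof. by move=> h; apply: lt_0_INR; apply/ssrnat.ltP. Qed.

Lemma fM m n : (0 < m)%N -> (0 < n)%N -> coprime m n -> f (m * n) = f m * f n.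
Proof.
move=> m0 n0 co; rewrite /term_rs totient_coprime // !mult_INR.
rewrite -!Rpower_mult_distr; try apply: INR_pos; rewrite ?totient_gt0 //.
rewrite !RdivE !RmultE invfM. 
by rewrite mulrACA.
Qed.

Definition RS (gT : finGroupType) (A : {set gT}) : R := \sum_(x in A) f #[x]%g.

Lemma R_G_RS (gT : finGroupType) (A : {set gT}) : @R_G gT A r s = RS A.
Proof.
rewrite /R_G /RS -big_enum; elim: (enum A) => [|x l IH]; first by rewrite big_nil.
by rewrite big_cons /= IH.
Qed.

Lemma RS_gt0 (gT : finGroupType) (G : {group gT}) : 0 < RS G.
Proof.
rewrite /RS (bigD1 1%g) ?group1 //= ltr_pwDl ?f_pos //.
by apply: sumr_ge0 => i _; apply: ltW; apply: f_pos.
Qed.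

Lemma RS_dprod (gT : finGroupType) (A B K : {group gT}) :
  (A \x B)%g = K -> coprime #|A| #|B| -> RS K = RS A * RS B.
Proof.
move=> dp co; have [_ defK cAB tiAB] := dprodP dp.
have eK : K = [set u.1 * u.2 | u in setX A B]%g :> {set gT}.
  apply/setP=> x; apply/idP/imsetP.
    move=> xK; have [y [z [yA zB -> _]]] := mem_dprod dp xK.
    by exists (y, z); rewrite ?inE ?yA ?zB.
  case=> [[y z]]; rewrite inE /= => /andP[yA zB] ->.
  by rewrite -defK; apply: imset2_f.
rewrite /RS eK big_imset /=; last first.
  move=> [y z] [y' z']; rewrite !inE /= => /andP[yA zB] /andP[y'A z'B] e.
  have xK : (y * z)%g \in K by rewrite -defK; apply: imset2_f.
  have [a [b [_ _ _ uniq]]] := mem_dprod dp xK.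
  have [-> ->] := uniq y z yA zB (erefl _).
  by have [-> ->] := uniq y' z' y'A z'B e.
rewrite big_distrlr /= pair_big /=.
apply: eq_big => [[y z]|[y z]]; rewrite ?inE //= => /andP[yA zB].
have cyz : coprime #[y]%g #[z]%g.
  by rewrite (coprime_dvdl (order_dvdG yA)) // (coprime_dvdr (order_dvdG zB)).
have czy : commute y z by apply: commute_sym; apply: (centsP cAB).
by rewrite orderM // fM ?order_gt0.
Qed.

Lemma RS1 (gT : finGroupType) (K : {group gT}) : #|K| = 1%N -> RS K = 1.
Proof.
move=> /eqP; rewrite -trivg_card1 => /eqP ->.
by rewrite /RS big_set1 order1 f1.
Qed.

Lemma pred0_nat (pi : nat_pred) n : (forall q, q \in pi = false) -> pi.-nat n -> n = 1%N.
Proof.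
move=> hpi; case/andP=> n0 /allP al; case: (ltngtP n 1) => // [|n1].
  by move: n0; rewrite ltnNge => /negP n0 /ltnSE h; case: n0.
have := pdiv_prime n1; move/(fun h => al (pdiv n) _).
by rewrite mem_primes pdiv_prime // n0 pdiv_dvd /= hpi => /(_ isT).
Qed.

Lemma RS_pcore_prod (gT : finGroupType) (G : {group gT}) (ps : seq nat) :
  nilpotent G -> uniq ps -> all prime ps ->
  RS 'O_[pred q | q \in ps](G)%g = \prod_(p <- ps) RS 'O_p(G)%g.
Proof.
move=> nilG; elim: ps => [|p ps IH] /=.
  move=> _ _; rewrite big_nil; apply: RS1; apply: (@pred0_nat [pred q | q \in [::]]); first by [].
  exact: pcore_pgroup.
case/andP=> pps ups /andP[pp pps'].
set K := 'O_[pred q | q \in p :: ps](G)%G.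
have nilK : nilpotent K by apply: nilpotentS (pcore_sub _ _) nilG.
have dK := nilpotent_pcoreC p nilK.
have e1 : 'O_p(K)%g = 'O_p(G)%g.
  rewrite -pcoreI; apply: eq_pcore => q; rewrite !inE.
  by case: eqP => // ->; rewrite eqxx.
have e2 : 'O_p^'(K)%g = 'O_[pred q | q \in ps](G)%g.
  rewrite -pcoreI; apply: eq_pcore => q; rewrite !inE.
  by case: eqP => [->|] //=; rewrite (negbTE pps).
rewrite big_cons -(IH ups pps') (RS_dprod dK); first by rewrite /= -e1 -e2.
exact: (pnat_coprime (pcore_pgroup _ _) (pcore_pgroup _ _)).
Qed.

Definition NS (gT : finGroupType) (P : {set gT}) (p j : nat) :=
  [set x in P | (#[x]%g %| p ^ j)%N].

Lemma tele (g : nat -> R) a k : (a <= k)%N ->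
  \sum_(j < k) (if (a <= j)%N then g j - g j.+1 else 0) = g a - g k.
Proof.
elim: k => [|k IH]; first by rewrite leqn0 => /eqP ->; rewrite big_ord0 subrr.
rewrite leq_eqVlt => /orP[/eqP <-|]; last rewrite ltnS => ak.
  rewrite big1 ?subrr // => j _; case: ifP => //.
  by rewrite leqNgt ltn_ord.
rewrite big_ord_recr /= IH // ak.
by rewrite addrA subrK.
Qed.

Lemma RS_pgroup (gT : finGroupType) (P : {group gT}) p k :
  prime p -> #|P| = (p ^ k)%N ->
  RS P = (p ^ k)%:R * f (p ^ k) +
         \sum_(j < k) #|NS P p j|%:R * (f (p ^ j) - f (p ^ j.+1)).
Proof.
move=> pp cP.
have p1 : (1 < p)%N by apply: prime_gt1.
rewrite /RS.
transitivity (\sum_(x in P) (f (p ^ k) +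
   \sum_(j < k) (if (#[x]%g %| p ^ j)%N then f (p ^ j) - f (p ^ j.+1) else 0))).
  apply: eq_bigr => x xP.
  have : (#[x]%g %| p ^ k)%N by rewrite -cP order_dvdG.
  case/(dvdn_pfactor _ _ pp) => a ak ->.
  rewrite (eq_bigr (fun j : 'I_k => if (a <= j)%N then f (p ^ j) - f (p ^ j.+1) else 0)).
    by have /= -> := tele (fun j => f (p ^ j)) ak; rewrite addrC subrK.
  by move=> j _; rewrite dvdn_Pexp2l.
rewrite big_split /= sumr_const cP mulr_natl; congr (_ + _).
rewrite exchange_big /=; apply: eq_bigr => j _.
rewrite -big_mkcondr /= mulr_natl -sumr_const.
by apply: eq_bigl => x; rewrite inE.
Qed.

Lemma f_step p j : prime p -> (0 < j)%N ->
  f (p ^ j.+1) = f (p ^ j) * Rpower (INR p) (s - r).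
Proof.
move=> pp j0; have p0 : (0 < p)%N by apply: prime_gt0.
have e2 : totient (p ^ j.+1) = (totient (p ^ j) * p)%N.
  by rewrite !totient_pfactor //= -mulnA -expnSr prednK.
rewrite /term_rs e2 expnSr !mult_INR totient_pfactor //.
have hp := INR_pos p0.
have hj : Rlt R0 (INR (p ^ j)) by apply: INR_pos; rewrite expn_gt0 p0.
have ht : Rlt R0 (INR (p.-1 * p ^ j.-1)).
  apply: INR_pos; rewrite muln_gt0 expn_gt0 p0 andbT -ltnS prednK //.
  exact: prime_gt1.
rewrite -!Rpower_mult_distr //.
rewrite /Rminus Rpower_plus Rpower_Ropp !RdivE !RmultE !RinvE.
by rewrite invfM; rewrite mulrACA.
Qed.

Lemma INR_gt1 p : (1 < p)%N -> Rlt 1 (INR p).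
Proof. by move=> p1; rewrite -INR_1; apply: lt_INR; apply/ssrnat.ltP. Qed.

Lemma Rpow_lt1 p : (1 < p)%N -> Rlt s r -> Rpower (INR p) (s - r) < 1.
Proof.
move=> p1 sr.
have h : Rlt (Rpower (INR p) (s - r)) (Rpower (INR p) 0).
  by apply: Rpower_lt; [exact: INR_gt1 | exact: Rlt_minus].
rewrite Rpower_O in h; last by apply: INR_pos; apply: ltnW.
by move/RltP: h; rewrite ?R1E.
Qed.

Lemma Rpow_gt1 p : (1 < p)%N -> Rlt r s -> 1 < Rpower (INR p) (s - r).
Proof.
move=> p1 sr.
have h : Rlt (Rpower (INR p) 0) (Rpower (INR p) (s - r)).
  by apply: Rpower_lt; [exact: INR_gt1 | exact: Rlt_Rminus].
rewrite Rpower_O in h; last by apply: INR_pos; apply: ltnW.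
by move/RltP: h; rewrite ?R1E.
Qed.

Lemma Rpow_eq1 p : (1 < p)%N -> r = s -> Rpower (INR p) (s - r) = 1.
Proof.
move=> p1 <-; rewrite Rminus_diag Rpower_O //; apply: INR_pos; exact: ltnW.
Qed.

Lemma NS_ge (gT : finGroupType) (P : {group gT}) p k j :
  prime p -> (p.-group P)%g -> #|P| = (p ^ k)%N -> (j <= k)%N -> (p ^ j <= #|NS P p j|)%N.
Proof.
move=> pp pP cP jk.
have [|H [sHP _ cH]] := normal_pgroup pP (normal_refl P) (r := j).
  by rewrite cP pfactorK.
rewrite -cH; apply: subset_leq_card; apply/subsetP => x xH.
by rewrite inE (subsetP sHP) //= -cH order_dvdG.
Qed.

Lemma NS0 (gT : finGroupType) (P : {group gT}) p : #|NS P p 0| = 1%N.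
Proof.
rewrite (_ : NS P p 0 = [set 1%g]) ?cards1 //.
apply/setP => x; rewrite !inE expn0 dvdn1 order_eq1.
by case: eqP => [->|]; rewrite ?group1 ?andbF.
Qed.

Lemma NS_cyc (gT : finGroupType) (P : {group gT}) p j :
  prime p -> cyclic P -> (#|NS P p j| <= p ^ j)%N.
Proof.
move=> pp cycP.
have gH := group_Ldiv (p ^ j) (cyclic_abelian cycP).
pose H := Group gH.
have eH : NS P p j = H.
  by apply/setP => x; rewrite /= !inE order_dvdn.
rewrite eH; apply: dvdn_leq; first by rewrite expn_gt0 prime_gt0.
rewrite -exponent_cyclic; last by apply: (cyclicS _ cycP); exact: subsetIl.
by rewrite -sub_LdivT subsetIr.
Qed.

Lemma NS_noncyc (gT : finGroupType) (P : {group gT}) p k :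
  prime p -> #|P| = (p ^ k)%N -> ~~ cyclic P ->
  (1 < k)%N /\ #|NS P p k.-1| = (p ^ k)%N.
Proof.
move=> pp cP ncP; split.
  case: k cP => [|[|k]] // cP.
    case/negP: ncP; move/eqP: cP; rewrite expn0 -trivg_card1 => /eqP ->.
    exact: cyclic1.
  by case/negP: ncP; apply: prime_cyclic; rewrite cP expn1.
rewrite -cP; apply: eq_card => x; rewrite inE.
case xP: (x \in P) => //=.
have : (#[x]%g %| p ^ k)%N by rewrite -cP order_dvdG.
case/(dvdn_pfactor _ _ pp) => a ak ex; rewrite ex dvdn_Pexp2l ?prime_gt1 //.
case: (ltngtP a k) ak => // [ak _|ea _]; first by rewrite -ltnS (ltn_predK ak).
case/negP: ncP; apply/cyclicP; exists x; apply/eqP.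
by rewrite eq_sym eqEcard cycle_subG xP /= -orderE ex cP ea.
Qed.

Definition cc p := 1 - Rpower (INR p) (s - r).

Lemma cmp (gT hT : finGroupType) (P : {group gT}) (Q : {group hT}) p k :
  prime p -> (p.-group P)%g -> (p.-group Q)%g ->
  #|P| = (p ^ k)%N -> #|Q| = (p ^ k)%N -> cyclic Q ->
  exists E, [/\ RS P - RS Q = cc p * E, 0 <= E & (~~ cyclic P -> 0 < E)].
Proof.
move=> pp pP pQ cP cQ cycQ.
pose E := \sum_(j < k) ((#|NS P p j|)%:R - (p ^ j)%:R) * f (p ^ j).
exists E; split.
- rewrite (RS_pgroup pp cP) (RS_pgroup pp cQ).
  have eQ : \sum_(j < k) #|NS Q p j|%:R * (f (p ^ j) - f (p ^ j.+1)) =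
            \sum_(j < k) (p ^ j)%:R * (f (p ^ j) - f (p ^ j.+1)).
    apply: eq_bigr => j _; congr (_%:R * _); apply/eqP; rewrite eqn_leq NS_cyc //.
    by rewrite (NS_ge pp pQ cQ) // ltnW.
  rewrite eQ.
  rewrite opprD addrACA subrr add0r -sumrB /E mulr_sumr; apply: eq_bigr => j _.
  case: (posnP j) => [->|j0].
    by rewrite NS0 expn0 !subrr !mul0r mulr0.
  rewrite -mulrBl f_step // /cc; ring.
- apply: sumr_ge0 => j _; apply: mulr_ge0; last exact: ltW (f_pos _).
  rewrite subr_ge0 ler_nat (NS_ge pp pP cP) // ltnW //.
- move=> ncP; have [k1 eN] := NS_noncyc pp cP ncP.
  have kk : (k.-1 < k)%N by rewrite prednK // ltnW.
  rewrite /E (bigD1 (Ordinal kk)) //=.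
  apply: ltr_pwDl; last first.
    apply: sumr_ge0 => j _; apply: mulr_ge0; last exact: ltW (f_pos _).
    rewrite subr_ge0 ler_nat (NS_ge pp pP cP) // ltnW //.
  apply: mulr_gt0; last exact: f_pos.
  by rewrite subr_gt0 ltr_nat eN ltn_exp2l ?prime_gt1.
Qed.

Lemma prod_cmp (ps : seq nat) (X Y : nat -> R) :
  (forall p, p \in ps -> 0 < Y p /\ Y p <= X p) ->
  [/\ 0 < \prod_(p <- ps) Y p, \prod_(p <- ps) Y p <= \prod_(p <- ps) X p &
      ((exists2 p, p \in ps & Y p < X p) -> \prod_(p <- ps) Y p < \prod_(p <- ps) X p)].
Proof.
elim: ps => [|q ps IH] H.
  by rewrite !big_nil; split => //; case.
have [IH1 IH2 IH3] := IH (fun p hp => H p (mem_behead (s := q :: ps) hp)).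
have [Yq XYq] := H q (mem_head _ _).
rewrite !big_cons; split.
- exact: mulr_gt0.
- by apply: ler_pM => //; apply: ltW.
- case=> p; rewrite inE => /orP[/eqP -> lt|pps lt].
    apply: (lt_le_trans (y := X q * \prod_(j <- ps) Y j)).
      by rewrite ltr_pM2r.
    by rewrite ler_pM2l //; apply: lt_le_trans XYq.
  apply: (lt_le_trans (y := Y q * \prod_(j <- ps) X j)).
    by rewrite ltr_pM2l //; apply: IH3; exists p.
  by rewrite ler_pM2r //; apply: lt_le_trans IH2.
Qed.

Lemma core (gT : finGroupType) (G : {group gT}) : nilpotent G -> ~~ cyclic G ->
  [/\ Rlt s r -> RS (Zp #|G|) < RS G,
      r = s -> RS G = RS (Zp #|G|) &
      Rlt r s -> RS G < RS (Zp #|G|)].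
Proof.
move=> nilG ncG.
set N := #|G|.
have N0 : (0 < N)%N by apply: cardG_gt0.
pose C := (Zp N)%G.
have cC : #|C| = N by rewrite card_Zp.
have cycC : cyclic C.
  apply: (cyclicS (G := [set: 'Z_N]%G)); first exact: subsetT.
  by apply/cyclicP; exists Zp1; apply: Zp_cycle.
have nilC : nilpotent C by apply: abelian_nil; apply: cyclic_abelian.
pose ps := primes N.
have ups : uniq ps := primes_uniq N.
have aps : all prime ps := all_prime_primes N.
have eG : 'O_[pred q | q \in ps](G)%g = G.
  apply: pcore_pgroup_id; rewrite -(@eq_pgroup _ (pi_of #|G|)); first exact: pgroup_pi.
  by move=> q; rewrite !inE.
have eC : 'O_[pred q | q \in ps](C)%g = C.
  apply: pcore_pgroup_id; rewrite -(@eq_pgroup _ (pi_of #|C|)); first exact: pgroup_pi.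
  by move=> q; rewrite !inE cC.
have RG := RS_pcore_prod nilG ups aps; rewrite eG in RG.
have RC := RS_pcore_prod nilC ups aps; rewrite eC in RC.
pose X (p : nat) := RS 'O_p(G)%g.
pose Y (p : nat) := RS 'O_p(C)%g.
have key : forall p, p \in ps ->
  exists E, [/\ X p - Y p = cc p * E, 0 <= E & (~~ cyclic 'O_p(G)%g -> 0 < E)].
  move=> p pps; have pp : prime p by move: pps; rewrite mem_primes => /andP[].
  apply: (@cmp _ _ 'O_p(G)%G 'O_p(C)%G p (logn p N) pp).
  - exact: pcore_pgroup.
  - exact: pcore_pgroup.
  - by rewrite (card_Hall (nilpotent_pcore_Hall p nilG)) p_part.
  - by rewrite (card_Hall (nilpotent_pcore_Hall p nilC)) cC p_part.
  - by apply: (cyclicS (pcore_sub _ _)).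
have wit : exists2 p, p \in ps & ~~ cyclic 'O_p(G)%g.
  apply/allPn; apply: contra ncG => /allP H.
  apply: (nil_Zgroup_cyclic _ nilG); apply/forall_inP => V /SylowP[p pp sylV].
  have eV := eq_Hall_pcore (nilpotent_pcore_Hall p nilG) sylV.
  case pps: (p \in ps); first by rewrite eV; apply: H.
  have /eqP -> : (V :==: 1)%g.
    rewrite trivg_card1 (card_Hall sylV) p_part.
    by move: (logn_gt0 p N); rewrite -/ps pps lt0n => /negbFE/eqP ->.
  exact: cyclic1.
have Xp : forall p, 0 < X p by move=> p; apply: RS_gt0.
have Yp : forall p, 0 < Y p by move=> p; apply: RS_gt0.
have ccpos : Rlt s r -> forall p, p \in ps -> 0 < cc p.
  move=> sr p pps; have pp : prime p by move: pps; rewrite mem_primes => /andP[].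
  by rewrite /cc subr_gt0; apply: Rpow_lt1 => //; apply: prime_gt1.
have ccneg : Rlt r s -> forall p, p \in ps -> cc p < 0.
  move=> sr p pps; have pp : prime p by move: pps; rewrite mem_primes => /andP[].
  by rewrite /cc subr_lt0; apply: Rpow_gt1 => //; apply: prime_gt1.
have cc0 : r = s -> forall p, p \in ps -> cc p = 0.
  move=> sr p pps; have pp : prime p by move: pps; rewrite mem_primes => /andP[].
  by rewrite /cc Rpow_eq1 ?subrr //; apply: prime_gt1.
rewrite RG RC -/X -/Y; split.
- move=> sr.
  have hyp : forall p, p \in ps -> 0 < Y p /\ Y p <= X p.
    move=> p pps; split => //; have [E [eE E0 _]] := key p pps.
    by rewrite -subr_ge0 eE; apply: mulr_ge0 => //; apply: ltW; apply: ccpos.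
  have [_ _ h] := prod_cmp hyp; apply: h.
  case: wit => p pps ncp; exists p => //.
  have [E [eE _ E0]] := key p pps; rewrite -subr_gt0 eE.
  by apply: mulr_gt0; [apply: ccpos | apply: E0].
- move=> rs; apply: eq_big_seq => p pps.
  have [E [eE _ _]] := key p pps; by apply/eqP; rewrite -subr_eq0 eE cc0 // mul0r.
- move=> sr.
  have hyp : forall p, p \in ps -> 0 < X p /\ X p <= Y p.
    move=> p pps; split => //; have [E [eE E0 _]] := key p pps.
    rewrite -subr_ge0 -opprB eE oppr_ge0; apply: mulr_le0_ge0 => //.
    by apply: ltW; apply: ccneg.
  have [_ _ h] := prod_cmp hyp; apply: h.
  case: wit => p pps ncp; exists p => //.
  have [E [eE _ E0]] := key p pps; rewrite -subr_gt0 -opprB eE -mulNr.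
  by apply: mulr_gt0; [rewrite oppr_gt0; apply: ccneg | apply: E0].
Qed.

End Main.

Theorem mainTheorem7 (gT : finGroupType) (G : {group gT}) (r s : R) :
  nilpotent G -> ~~ cyclic G ->
  (Rlt s r -> Rlt R0 (T_G G r s)) /\
  (r = s -> T_G G r s = R0) /\
  (Rlt r s -> Rlt (T_G G r s) R0).
Proof.
move=> nilG ncG; have [h1 h2 h3] := core r s nilG ncG.
rewrite /T_G /R_C !R_G_RS RminusE; split; [|split].
- by move=> sr; apply/RltP; rewrite subr_gt0; apply: h1.
- by move=> rs; rewrite h2 // subrr.
- by move=> rs; apply/RltP; rewrite subr_lt0; apply: h3.
Qed.
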